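(* Let $\Lambda=G_{K,L}$ be the $K\times L$ open grid with $K,L\ge2$, with its hard-core energy landscape. There exists a path $\omega^*$ from $\mathbf e$ to $\mathbf o$ in $\mathcal X$ such that $\max_{\sigma\in\omega^*}H(\sigma)-H(\mathbf e)=\lceil K/2\rceil+1$.
   Context: Open grid $G_{K,L}$: sites $(v_1,v_2)$ with $0\le v_1\le L-1$, $0\le v_2\le K-1$; $v,w$ adjacent iff $|v_1-w_1|+|v_2-w_2|=1$. Even sites: $v_1+v_2$ even. State space $\mathcal X$ = set of $\sigma\in\{0,1\}^\Lambda$ with $\sigma(v)\sigma(w)=0$ for adjacent $v,w$; $H(\sigma)=-\sum_v\sigma(v)$. A path is a finite sequence of configurations in $\mathcal X$ in which consecutive configurations differ in exactly one site (or coincide). $\mathbf e$ (resp. $\mathbf o$) has particles exactly at the even (resp. odd) sites. *)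

(* Defs.v *)
From mathcomp Require Import all_boot all_order all_algebra.
Set Implicit Arguments. Unset Strict Implicit. Unset Printing Implicit Defensive.
Import Order.TTheory GRing.Theory Num.Theory.

Definition site (K L : nat) : finType := ('I_L * 'I_K)%type.

Definition absdiff (a b : nat) : nat := ((a - b) + (b - a))%N.

Definition adj K L (v w : site K L) : bool :=
  (absdiff v.1 w.1 + absdiff v.2 w.2 == 1)%N.

(* A configuration sigma in {0,1}^Lambda is identified with its set of occupied sites. *)
Definition conf K L := {set site K L}.

Definition feasible K L (s : conf K L) : bool :=
  [forall v, forall w, adj v w ==> ~~ ((v \in s) && (w \in s))].

Definition H K L (s : conf K L) : int := - (#|s|%:Z).

Definition even_conf K L : conf K L := [set v : site K L | ~~ odd (v.1 + v.2)].
Definition odd_conf K L : conf K L := [set v : site K L | odd (v.1 + v.2)].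

Definition step K L (s t : conf K L) : bool := (#|(s :\: t) :|: (t :\: s)| <= 1)%N.

Definition is_path K L (a : conf K L) (s : seq (conf K L)) (b : conf K L) : Prop :=
  [/\ all (@feasible K L) (a :: s), path (@step K L) a s & last a s = b].

(* Main.v *)
Require Import Defs.
From mathcomp Require Import all_boot all_order all_algebra.
From mathcomp Require Import zify.
Import Order.TTheory GRing.Theory Num.Theory.

Definition even_at (K n : nat) : bool := ~~ odd (n %/ K + n %% K).

Lemma count_iota_sum (Q : nat -> bool) m n :
  count Q (iota m n) = \sum_(j < n) Q (m + j).
Proof.
elim: n => [|n IH]; first by rewrite big_ord0.
have -> : iota m n.+1 = iota m n ++ [:: m + n] by rewrite -addn1 iotaD.
by rewrite big_ord_recr /= -IH count_cat /= addn0.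
Qed.

Lemma count_iota_cat (Q : nat -> bool) m n :
  count Q (iota 0 (m + n)) = count Q (iota 0 m) + count Q (iota m n).
Proof. by rewrite iotaD count_cat. Qed.

Lemma count_mono (Q : nat -> bool) m n : m <= n ->
  count Q (iota 0 m) <= count Q (iota 0 n).
Proof. move=> h; rewrite -(subnKC h) count_iota_cat; exact: leq_addr. Qed.

Lemma count_step (Q : nat -> bool) m :
  count Q (iota 0 m.+1) <= count Q (iota 0 m) + 1.
Proof. rewrite -addn1 count_iota_cat /= addn0; case: (Q m) => /=; lia. Qed.

Lemma even_at_shift K n : 0 < K -> even_at K (K + n) = ~~ even_at K n.
Proof.
move=> hK; rewrite /even_at; have -> : K + n = 1 * K + n by rewrite mul1n.
rewrite divnMDl // modnMDl.
by rewrite add1n addSn oddS negbK.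
Qed.

Lemma even_at_small K n : n < K -> even_at K n = ~~ odd n.
Proof. by move=> h; rewrite /even_at divn_small // modn_small. Qed.

Lemma count_even_iota n : count (fun i => ~~ odd i) (iota 0 n) = uphalf n.
Proof.
elim: n => [|n IH] //; rewrite -addn1 count_iota_cat IH /= addn0.
rewrite addn1 (uphalfE n.+1) /= uphalf_half; case: (odd n) => /=; lia.
Qed.

Lemma E_K K : 0 < K -> count (even_at K) (iota 0 K) = uphalf K.
Proof.
move=> hK; rewrite -count_even_iota; apply: eq_in_count => i.
by rewrite mem_iota add0n => /andP[_ h]; rewrite even_at_small.
Qed.

Lemma E_shift K m : 0 < K ->
  count (even_at K) (iota 0 (K + m)) =
  count (even_at K) (iota 0 K) + count (predC (even_at K)) (iota 0 m).
Proof.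
move=> hK; rewrite count_iota_cat; congr (_ + _).
rewrite -(addn0 K) iotaDl count_map addn0; apply: eq_count => i /=.
by rewrite even_at_shift.
Qed.

Lemma count_trunc (p : nat -> bool) a N :
  count (fun n => p n && (n < a)) (iota 0 N) = count p (iota 0 (minn a N)).
Proof.
have h : N = minn a N + (N - minn a N) by lia.
rewrite {1}h count_iota_cat.
rewrite (@eq_in_count _ _ p (iota 0 (minn a N))); last first.
  move=> i; rewrite mem_iota => /andP[_ hi]. 
  have -> : i < a by lia. by rewrite andbT.
rewrite (@eq_in_count _ _ pred0 (iota (minn a N) (N - minn a N))); first by rewrite count_pred0 addn0.
move=> i; rewrite mem_iota => /andP[h1 h2] /=.
have -> : i < a = false by lia. by rewrite andbF.
Qed.

Set Implicit Arguments. Unset Strict Implicit.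

Definition idx {K L : nat} (w : site K L) : nat := w.1 * K + w.2.

Lemma idx_div K L (w : site K L) : idx w %/ K = nat_of_ord w.1.
Proof.
have := ltn_ord w.2 => hw; have hK : 0 < K by lia.
by rewrite /idx divnMDl // divn_small // addn0.
Qed.

Lemma idx_mod K L (w : site K L) : idx w %% K = nat_of_ord w.2.
Proof. by rewrite /idx modnMDl modn_small. Qed.

Lemma idx_lt K L (w : site K L) : idx w < L * K.
Proof.
rewrite /idx; move: (ltn_ord w.1) (ltn_ord w.2); move: (nat_of_ord w.1) (nat_of_ord w.2) => i j hi hj.
have : i.+1 * K <= L * K by rewrite leq_mul2r hi orbT.
rewrite mulSn; lia.
Qed.

Lemma even_at_idx K L (w : site K L) : even_at K (idx w) = ~~ odd (w.1 + w.2).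
Proof. by rewrite /even_at idx_div idx_mod. Qed.

Lemma idx_inj K L : injective (@idx K L).
Proof.
move=> v w h; have h1 := idx_div v; have h2 := idx_mod v.
rewrite h idx_div in h1; rewrite h idx_mod in h2.
case: v w h1 h2 {h} => [v1 v2] [w1 w2] /= h1 h2.
by congr pair; apply: val_inj.
Qed.

Lemma sum_grid K (Q : nat -> bool) L :
  \sum_(i < L) \sum_(j < K) (Q (i * K + j) : nat) = count Q (iota 0 (L * K)).
Proof.
elim: L => [|L IH]; first by rewrite big_ord0.
rewrite big_ord_recr /= IH mulSnr count_iota_cat count_iota_sum; congr (_ + _).
by rewrite count_iota_sum.
Qed.

Lemma card_grid K L (Q : nat -> bool) :
  #|[set w : site K L | Q (idx w)]| = count Q (iota 0 (L * K)).
Proof.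
rewrite -sum_grid -sum1_card big_mkcond /=.
rewrite (pair_bigA _ (fun (i : 'I_L) (j : 'I_K) => (Q (i * K + j) : nat))) /=.
by apply: eq_bigr => w _; rewrite inE /idx; case: (Q _).
Qed.

Lemma adj_facts K L (v w : site K L) : adj v w ->
  odd (v.1 + v.2) = ~~ odd (w.1 + w.2) /\ idx v <= idx w + K /\ idx w <= idx v + K.
Proof.
rewrite /adj /absdiff /idx => /eqP.
move: (ltn_ord v.2) (ltn_ord w.2).
move: (nat_of_ord v.1) (nat_of_ord v.2) (nat_of_ord w.1) (nat_of_ord w.2) => x1 x2 y1 y2 hx hy h.
have : (x1 = y1 /\ (x2 = y2.+1 \/ y2 = x2.+1)) \/ (x2 = y2 /\ (x1 = y1.+1 \/ y1 = x1.+1)) by lia.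
case=> [[-> [->|->]]|[-> [->|->]]].
- by rewrite ?addnS ?addSn ?oddS ?negbK ?mulSn; split => //; lia.
- by rewrite ?addnS ?addSn ?oddS ?negbK ?mulSn; split => //; lia.
- by rewrite ?addnS ?addSn ?oddS ?negbK ?mulSn; split => //; lia.
- by rewrite ?addnS ?addSn ?oddS ?negbK ?mulSn; split => //; lia.
Qed.

Set Implicit Arguments. Unset Strict Implicit.

Definition P (K L : nat) (a b : nat) : conf K L :=
  [set w : site K L | (~~ odd (w.1 + w.2) && (a <= idx w)) || (odd (w.1 + w.2) && (idx w < b))].

Lemma feas_P K L a b : (b = 0 \/ b + K <= a) -> feasible (P K L a b).
Proof.
move=> hab; apply/forallP => v; apply/forallP => w; apply/implyP => hadj.
have [hp [h1 h2]] := adj_facts hadj.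
rewrite !inE hp; case: (odd (w.1 + w.2)) => /=; lia.
Qed.

Lemma step_P K L a b a' b' : (a' = a.+1 /\ b' = b) \/ (a' = a /\ b' = b.+1) ->
  step (P K L a b) (P K L a' b').
Proof.
move=> h; rewrite /step; apply/card_le1_eqP => x y.
have key : forall z, z \in (P K L a b :\: P K L a' b') :|: (P K L a' b' :\: P K L a b) ->
   idx z = if a' == a then b else a.
  move=> z; case: h => [[-> ->]|[-> ->]]; rewrite !inE ?eqxx;
  try (have -> : (a.+1 == a) = false by lia); case: (odd _) => /=; lia.
by move=> /key hx /key hy; apply: idx_inj; rewrite hx hy.
Qed.

Definition st K L (t : nat) : conf K L :=
  P K L (minn t K + uphalf (t - K)) ((t - K)./2).

Lemma feas_st K L t : feasible (st K L t).
Proof.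
apply: feas_P; case: (leqP K t) => h.
- right; rewrite uphalf_half; lia.
- left; have -> : t - K = 0 by lia. by [].
Qed.

Lemma step_st K L t : step (st K L t) (st K L t.+1).
Proof.
apply: step_P; case: (leqP K t) => h.
- have -> : minn t.+1 K = K by lia.
  have -> : t.+1 - K = (t - K).+1 by lia.
  rewrite (uphalfE (t - K).+1) /= uphalf_half.
  case: (odd (t - K)) => /=; lia.
- have -> : t - K = 0 by lia. have -> : t.+1 - K = 0 by lia.
  left; split => //; lia.
Qed.

Set Implicit Arguments. Unset Strict Implicit.

Lemma card_P K L a b : #|P K L a b| =
  count (fun n => (even_at K n && (a <= n)) || (~~ even_at K n && (n < b))) (iota 0 (L * K)).
Proof.
rewrite -card_grid; apply: eq_card => w; by rewrite !inE even_at_idx negbK.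
Qed.

Lemma card_e K L : #|even_conf K L| = count (even_at K) (iota 0 (L * K)).
Proof.
rewrite -card_grid; apply: eq_card => w; by rewrite !inE even_at_idx.
Qed.

Lemma count_identity K a b (s : seq nat) :
  count (fun n => (even_at K n && (a <= n)) || (~~ even_at K n && (n < b))) s
  + count (fun n => even_at K n && (n < a)) s
  = count (even_at K) s + count (fun n => predC (even_at K) n && (n < b)) s.
Proof.
elim: s => //= x s IH.
have : (x < a) = ~~ (a <= x) by rewrite ltnNge.
move: IH; case: (even_at K x); case: (a <= x); case: (x < a); case: (x < b) => /=; lia.
Qed.

Lemma bound K L a b : 0 < K -> a <= K + b + 1 -> b <= L * K ->
  #|even_conf K L| <= #|P K L a b| + (uphalf K + 1).
Proof.
move=> hK hab hb; rewrite card_e card_P.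
have := count_identity K a b (iota 0 (L * K)).
rewrite count_trunc.
rewrite (count_trunc (predC (even_at K))).
have -> : minn b (L * K) = b by lia.
have h2 := E_shift K b.+1 hK. rewrite E_K // in h2.
have h3 := count_step (predC (even_at K)) b.
have : minn a (L * K) <= K + b.+1 by lia.
move/(count_mono (even_at K)); rewrite h2; lia.
Qed.

Lemma exact K L : 2 <= K -> 2 <= L ->
  #|even_conf K L| = #|P K L (K + 2) 1| + (uphalf K + 1).
Proof.
move=> hK hL; rewrite card_e card_P.
have := count_identity K (K + 2) 1 (iota 0 (L * K)).
rewrite count_trunc (count_trunc (predC (even_at K))).
have hN : 2 * K <= L * K by rewrite leq_mul2r hL orbT.
have -> : minn (K + 2) (L * K) = K + 2 by lia.
have -> : minn 1 (L * K) = 1 by lia.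
rewrite E_shift; last by lia.
rewrite E_K; last by lia.
have -> : count (predC (even_at K)) (iota 0 2) = 1.
  by rewrite /= !even_at_small //; lia.
have -> : count (predC (even_at K)) (iota 0 1) = 0.
  by rewrite /= !even_at_small //; lia.
lia.
Qed.

Lemma st_K3 K L : st K L (K + 3) = P K L (K + 2) 1.
Proof.
rewrite /st; have -> : minn (K + 3) K = K by lia.
by have -> : K + 3 - K = 3 by lia.
Qed.

Lemma st_bound K L t : 0 < K -> t <= K + 2 * (L * K) ->
  #|even_conf K L| <= #|st K L t| + (uphalf K + 1).
Proof.
move=> hK ht; apply: bound => //.
- rewrite uphalf_half; case: (odd _) => /=; lia.
- have : (t - K)./2 <= (2 * (L * K))./2 by apply: half_leq; lia.
  by rewrite mul2n doubleK.
Qed.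

Set Implicit Arguments. Unset Strict Implicit.

Lemma path_iota (T : Type) (r : rel T) (f : nat -> T) :
  (forall t, r (f t) (f t.+1)) -> forall x n, path r (f x) (map f (iota x.+1 n)).
Proof.
move=> h x n; elim: n x => [|n IH] x //=.
by rewrite h IH.
Qed.

Lemma last_iota x n : last x (iota x.+1 n) = x + n.
Proof. elim: n x => [|n IH] x /=; first by rewrite addn0. by rewrite IH addnS. Qed.

Lemma st0 K L : even_conf K L = st K L 0.
Proof.
apply/setP => w; rewrite /st min0n sub0n /= !inE leq0n ltn0.
by case: (odd _).
Qed.

Lemma stM K L : 0 < K -> odd_conf K L = st K L (K + 2 * (L * K)).
Proof.
move=> hK; rewrite /st.
have -> : minn (K + 2 * (L * K)) K = K by lia.
have -> : K + 2 * (L * K) - K = (L * K).*2 by rewrite mul2n; lia.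
rewrite uphalf_double doubleK.
apply/setP => w; rewrite !inE; have := idx_lt w.
case: (odd _) => /=; lia.
Qed.

Local Open Scope ring_scope.

Theorem proposition5p10 (K L : nat) (hK : (2 <= K)%N) (hL : (2 <= L)%N) :
  exists s : seq (conf K L),
    is_path (even_conf K L) s (odd_conf K L) /\
    (exists2 sg, sg \in even_conf K L :: s &
       H sg - H (even_conf K L) = (uphalf K + 1)%N%:Z) /\
    (forall sg, sg \in even_conf K L :: s ->
       H sg - H (even_conf K L) <= (uphalf K + 1)%N%:Z).
Proof.
have hK0 : (0 < K)%N by lia.
have hN : (2 * K <= L * K)%N by rewrite leq_mul2r hL orbT.
set M := (K + 2 * (L * K))%N.
exists (map (st K L) (iota 1 M)).
have mem : forall sg, sg \in even_conf K L :: map (st K L) (iota 1 M) ->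
    exists2 t, (t <= M)%N & sg = st K L t.
  move=> sg; rewrite in_cons => /orP[/eqP ->|/mapP[t ht ->]].
    by exists 0%N => //; rewrite st0.
  by exists t => //; move: ht; rewrite mem_iota; lia.
split; [|split].
- split.
  + apply/allP => sg /mem [t _ ->]; exact: feas_st.
  + rewrite st0; apply: path_iota => t; exact: step_st.
  + by rewrite st0 last_map last_iota add0n -stM.
- exists (st K L (K + 3)).
    by rewrite in_cons; apply/orP; right; apply: map_f; rewrite mem_iota; lia.
  rewrite st_K3 /H (exact hK hL); lia.
- move=> sg /mem [t ht ->]; have := @st_bound K L t hK0 ht; rewrite /H; lia.
Qed.
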